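(* Let $p\ge1$, let $\phi_1,\dots,\phi_p:\mathbb Z\to\mathbb C$, let $s\in\mathbb Z$ and $1\le m\le p$. Then the function $t\mapsto \xi^{(m)}_{t,s}$, $t\in\{s-p+1,s-p+2,\dots\}$, satisfies $$\xi^{(m)}_{t,s}=\sum_{l=1}^{p}\phi_l(t)\,\xi^{(m)}_{t-l,s}\quad\text{for all } t\ge s+1,$$ with initial values $\xi^{(m)}_{s-m+1,s}=1$ and $\xi^{(m)}_{s-i,s}=0$ for $0\le i\le p-1$, $i\ne m-1$.
   Context: Convention: $\phi_l(t)=0$ for $l>p$. For integers $t>s$ and $1\le m\le p$, $\Phi^{(m)}_{t,s}$ is the $(t-s)\times(t-s)$ lower Hessenberg matrix whose $(i,j)$ entry ($1\le i,j\le t-s$) is: $\phi_{m+i-1}(s+i)$ if $j=1$; $-1$ if $j=i+1$; $\phi_{i-j+1}(s+i)$ if $2\le j\le i$; $0$ if $j>i+1$. Define, for $t\ge s-p+1$: $\xi^{(m)}_{t,s}=\det\Phi^{(m)}_{t,s}$ if $t>s$; $\xi^{(m)}_{t,s}=1$ if $t=s-m+1$; $\xi^{(m)}_{t,s}=0$ if $s-p+1\le t\le s$ and $t\ne s-m+1$. *)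

(* Defs.v *)
From HB Require Import structures.
From mathcomp Require Import all_boot all_order all_algebra.
From mathcomp Require Import complex.
From mathcomp Require Import Rstruct.
Import ComplexField.
Set Implicit Arguments. Unset Strict Implicit. Unset Printing Implicit Defensive.
Import Order.TTheory GRing.Theory Num.Theory.
Local Open Scope ring_scope.

Notation C := (complex Rdefinitions.R).

Definition phiext (p : nat) (phi : nat -> int -> C) (l : nat) (t : int) : C :=
  if (l <= p)%N then phi l t else 0.

(* Phi^{(m)}_{t,s} of size n = t - s, indices shifted to 0-based:
   row i (paper i+1), column j (paper j+1). *)
Definition PhiMat (p : nat) (phi : nat -> int -> C) (m : nat) (s : int) (n : nat)
  : 'M[C]_n :=
  \matrix_(i < n, j < n)
    if j == 0%N :> nat then phiext p phi (m + i) (s + (i.+1)%:Z)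
    else if j == i.+1 :> nat then -1
    else if (j <= i)%N then phiext p phi (i - j).+1 (s + (i.+1)%:Z)
    else 0.

(* xi^{(m)}_{t,s}; the value for t < s-p+1 (outside the domain) is set to 0
   and is never used. *)
Definition xi (p : nat) (phi : nat -> int -> C) (m : nat) (t s : int) : C :=
  if s < t then \det (PhiMat p phi m s `|t - s|%N)
  else if t == s - m%:Z + 1 then 1 else 0.

(* Main.v *)
Require Import Defs.
From HB Require Import structures.
From mathcomp Require Import all_boot all_order all_algebra.
From mathcomp Require Import complex Rstruct.
From mathcomp Require Import zify.
Import ComplexField.
Import Order.TTheory GRing.Theory Num.Theory.
Local Open Scope ring_scope.

Section Hess.
Variable R : comNzRingType.
Variable h : nat -> nat -> R.
Definition HM (n : nat) : 'M[R]_n := \matrix_(i < n, j < n)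
  if j == 0%N :> nat then h i 0 else if j == i.+1 :> nat then -1
  else if (j <= i)%N then h i j else 0.

Lemma HM_entry n (i k : 'I_n) :
  HM n i k = (if (k <= i)%N then h i k else 0) - (if k == i.+1 :> nat then 1 else 0).
Proof.
rewrite mxE; case: eqP => [->|k0]; first by rewrite leq0n; case: eqP => //; rewrite subr0.
case: eqP => [->|ki]; first by rewrite ltnn sub0r.
by rewrite subr0.
Qed.

Lemma cof_one n : cofactor (HM n.+1) ord_max 0 = 1.
Proof.
rewrite /cofactor det_trig.
  rewrite (eq_bigr (fun _ => -1)); last first.
    move=> i _; rewrite !mxE /= /bump /=.
    have -> : (n <= i)%N = false by rewrite leqNgt ltn_ord.
    by rewrite add1n eqxx.
  rewrite prodr_const card_ord /= addn0 -exprMn mulrNN mulr1 expr1n //.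
apply/forallP => i; apply/forallP => j; apply/implyP => ij.
rewrite !mxE /= /bump /=.
have -> : (n <= i)%N = false by rewrite leqNgt ltn_ord.
rewrite add1n add0n /=.
have -> : (j.+1 == i.+1) = false by apply/eqP; lia.
by have -> : (j.+1 <= i)%N = false by lia.
Qed.

Lemma HM_rec n : \det (HM n.+1) = \sum_(k < n.+1) h n k * \det (HM k).
Proof.
elim/ltn_ind: n => n IH.
set X := \sum_(k < n.+1) h n k * \det (HM k).
set A := HM n.+1.
set v : 'cV[R]_n.+1 := \col_(k < n.+1) \det (HM k).
have Av : A *m v = X *: delta_mx ord_max 0.
  apply/matrixP => i z; rewrite ord1 !mxE.
  under eq_bigr do rewrite HM_entry mxE mulrBl.
  rewrite sumrB.
  have E1 : \sum_(k < n.+1) (if (k <= i)%N then h i k else 0) * \det (HM k)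
          = \sum_(k < i.+1) h i k * \det (HM k).
    rewrite -(big_mkord xpredT (fun k => (if (k <= i)%N then h i k else 0) * \det (HM k))).
    rewrite -(big_mkord xpredT (fun k => h i k * \det (HM k))).
    rewrite (big_cat_nat _ (n:=i.+1)) //= ?ltn_ord //.
    rewrite [X in _ + X]big_nat_cond [X in _ + X]big1 ?addr0.
      by apply: eq_big_nat => k /andP [_ ki]; rewrite ltnS in ki; rewrite ki.
    move=> k /andP [/andP [ik _] _]; rewrite leqNgt ik mul0r //.
  rewrite E1.
  have E2 : \sum_(k < n.+1) (if k == i.+1 :> nat then 1 else 0) * \det (HM k)
          = if (i.+1 < n.+1)%N then \det (HM i.+1) else 0.
    rewrite -(big_ord1_eq (@GRing.add R) (fun k => \det (HM k)) i.+1 n.+1) [RHS]big_mkcond /=; apply: eq_bigr => k _.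
    by case: ifP; rewrite ?mul1r ?mul0r.
  rewrite E2.
  case: (ltnP i n) => iN.
    have -> : (i == ord_max) = false by apply/negbTE/eqP => E; move: iN; rewrite E /=; lia.
    by rewrite IH // ltnS iN subrr mulr0.
  have Ei : i = ord_max by apply/val_inj => /=; have := ltn_ord i; lia.
  rewrite Ei /= eqxx ltnn subr0 mulr1 //.
have := congr1 (fun M => (\adj A *m M) 0 0) Av.
rewrite mulmxA mul_adj_mx mul_scalar_mx -scalemxAr !mxE.
rewrite (bigD1 ord_max) //= big1 ?addr0; last first.
  by move=> k /negPf kn; rewrite !mxE kn mulr0.
rewrite !mxE !eqxx mulr1 /=.
rewrite /A /=.
have -> : \det (HM 0) = 1 by rewrite det_mx00.
by rewrite mulr1 cof_one mulr1.
Qed.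
End Hess.
Arguments HM {R} h n.

Definition hh (p : nat) (phi : nat -> int -> C) (m : nat) (s : int) (i k : nat) : C :=
  if k == 0%N then phiext p phi (m + i) (s + (i.+1)%:Z)
  else phiext p phi (i - k).+1 (s + (i.+1)%:Z).

Lemma PhiMat_HM p phi m s n : PhiMat p phi m s n = HM (hh p phi m s) n.
Proof.
apply/matrixP => i j; rewrite !mxE /hh eqxx.
case: ifP => // j0; case: ifP => // _; case: ifP => // _.
Qed.

Lemma xi_pos p phi m s (k : nat) : (0 < k)%N ->
  xi p phi m (s + k%:Z) s = \det (HM (hh p phi m s) k).
Proof.
move=> k0; rewrite /xi.
have -> : (s < s + k%:Z) = true by lia.
have -> : absz (s + k%:Z - s)%R = k by lia.
by rewrite PhiMat_HM.
Qed.

Theorem proposition1 (p : nat) (phi : nat -> int -> C) (s : int) (m : nat) :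
  (1 <= p)%N -> (1 <= m <= p)%N ->
  [/\ (forall t : int, s + 1 <= t ->
         xi p phi m t s = \sum_(1 <= l < p.+1) phi l t * xi p phi m (t - l%:Z) s),
      xi p phi m (s - m%:Z + 1) s = 1
    & (forall i : nat, (i <= p - 1)%N -> i != (m - 1)%N ->
         xi p phi m (s - i%:Z) s = 0)].
Proof.
move=> p1 /andP [m1 mp]; split.
- move=> t ts.
  have [n Hn] : exists n : nat, t = s + (n.+1)%:Z.
    by exists (absz (t - s)%R).-1; lia.
  rewrite Hn xi_pos // HM_rec.
  set g := fun l : nat => phiext p phi l (s + (n.+1)%:Z) * xi p phi m (s + (n.+1)%:Z - l%:Z) s.
  have R1 : \sum_(1 <= l < p.+1) phi l (s + (n.+1)%:Z) * xi p phi m (s + (n.+1)%:Z - l%:Z) s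
          = \sum_(1 <= l < p.+1) g l.
    apply: eq_big_nat => l /andP [_ lp]; rewrite /g /phiext.
    by rewrite ltnS in lp; rewrite lp.
  rewrite R1.
  set M := (p + n + m).+1.
  have R2 : \sum_(1 <= l < p.+1) g l = \sum_(1 <= l < M) g l.
    rewrite [RHS](big_cat_nat _ (n:=p.+1)) /= ?ltnS ?leq_addr //; last by rewrite /M; lia.
    rewrite [X in _ = _ + X]big_nat_cond [X in _ = _ + X]big1 ?addr0 //.
    move=> l /andP [/andP [pl _] _]; rewrite /g /phiext.
    by rewrite leqNgt pl mul0r.
  rewrite R2 (big_cat_nat _ (n:=n.+1)) //=; last by rewrite /M; lia.
  have R3 : \sum_(n.+1 <= l < M) g l = phiext p phi (m + n) (s + (n.+1)%:Z).
    rewrite (big_cat_nat _ (n:=(n+m)%N)) /=; [|lia|rewrite /M; lia].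
    rewrite big_nat_cond big1 ?add0r; last first.
      move=> l /andP [/andP [l1 l2] _]; rewrite /g /xi.
      have -> : (s < s + (n.+1)%:Z - l%:Z) = false by lia.
      have -> : (s + (n.+1)%:Z - l%:Z == s - m%:Z + 1) = false by lia.
      by rewrite mulr0.
    rewrite big_ltn; last by rewrite /M; lia.
    rewrite big_nat_cond big1 ?addr0; last first.
      move=> l /andP [/andP [l1 l2] _]; rewrite /g /xi.
      have -> : (s < s + (n.+1)%:Z - l%:Z) = false by lia.
      have -> : (s + (n.+1)%:Z - l%:Z == s - m%:Z + 1) = false by lia.
      by rewrite mulr0.
    rewrite /g /xi.
    have -> : (s < s + (n.+1)%:Z - (n + m)%N%:Z) = false by lia.
    have -> : (s + (n.+1)%:Z - (n + m)%N%:Z == s - m%:Z + 1) = true by lia.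
    by rewrite mulr1 addnC.
  rewrite R3 -(big_mkord xpredT (fun k => hh p phi m s n k * \det (HM (hh p phi m s) k))) big_ltn // det_mx00 mulr1 /hh eqxx addrC.
  congr (_ + _).
  rewrite big_nat_rev /=; apply: eq_big_nat => k /andP [k1 kn].
  rewrite /hh.
  have -> : (1 + n.+1 - k.+1)%N = (n.+1 - k)%N by lia.
  have -> : (n.+1 - k == 0)%N = false by lia.
  have -> : (n - (n.+1 - k)).+1 = k by lia.
  rewrite /g -xi_pos; last by lia.
  have -> : s + (n.+1 - k)%N%:Z = s + (n.+1)%:Z - k%:Z by lia.
  congr (_ * xi p phi m _ s); lia.
- rewrite /xi ifF; last by lia.
  by rewrite ifT //; lia.
- move=> i ip im; rewrite /xi ifF; last by lia.
  by rewrite ifF //; lia.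
Qed.
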